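(* Let $F\colon\mathcal{B}\to\mathcal{C}$ be a lax functor of bicategories which is essentially surjective, essentially full, and fully faithful. Then for each object $X\in\mathcal{C}$ the lax slice bicategory $F\downarrow X$ has an inc-lax terminal object.
   Context: Lax functor constraints: $F^2_{g,f}\colon Fg\circ Ff\Rightarrow F(gf)$, $F^0_A\colon 1_{FA}\Rightarrow F1_A$. $F$ is essentially surjective if it is surjective on adjoint-equivalence classes of objects; essentially full if each local functor $\mathcal{B}(A,B)\to\mathcal{C}(FA,FB)$ is surjective on isomorphism classes of 1-cells; fully faithful if it is a bijection on 2-cells between any pair of parallel 1-cells. Lax slice $F\downarrow X$: objects $(A,f_A)$ with $f_A\colon FA\to X$; 1-cells $(p,\theta)\colon(A_0,f_0)\to(A_1,f_1)$ with $p\colon A_0\to A_1$ and $\theta\colon f_0\Rightarrow f_1\circ Fp$; 2-cells $\alpha\colon p_0\Rightarrow p_1$ with $(1_{f_1}*F\alpha)\circ\theta_0=\theta_1$; identity 1-cell $(1_A,(1_{f_A}*F^0_A)\circ r^{-1}_{f_A})$; composite of $(p_0,\theta_0),(p_1,\theta_1)$ is $(p_1p_0,(1_{f_2}*F^2_{p_1,p_0})\circ a\circ(\theta_1*1_{Fp_0})\circ\theta_0)$; 2-cell compositions, associator, unitors from $\mathcal{B}$. An inc-lax terminal object of a bicategory $\mathcal{D}$ is an object $T$ with a lax transformation $k\colon\mathrm{Id}_{\mathcal{D}}\to\mathrm{const}_T$ (where $\mathrm{const}_T$ sends all objects to $T$, 1-cells to $1_T$, 2-cells to $1_{1_T}$,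 with unit constraint $1_{1_T}$ and composition constraint $\ell_{1_T}$) such that every component $k_Z\colon Z\to T$ is initial in the hom-category $\mathcal{D}(Z,T)$ and $k_T=1_T$. *)

(* Defs.v *)
Set Implicit Arguments.
Unset Strict Implicit.

Record bicat_data : Type := BicatData {
  ob : Type;
  hom : ob -> ob -> Type;
  cell : forall A B : ob, hom A B -> hom A B -> Type;
  id1 : forall A : ob, hom A A;
  comp1 : forall A B C : ob, hom B C -> hom A B -> hom A C;
  id2 : forall (A B : ob) (f : hom A B), cell f f;
  vcomp : forall (A B : ob) (f g h : hom A B), cell g h -> cell f g -> cell f h;
  hcomp : forall (A B C : ob) (g g' : hom B C) (f f' : hom A B),
      cell g g' -> cell f f' -> cell (comp1 g f) (comp1 g' f');
  assoc : forall (A B C D : ob) (h : hom C D) (g : hom B C) (f : hom A B),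
      cell (comp1 (comp1 h g) f) (comp1 h (comp1 g f));
  assoc_inv : forall (A B C D : ob) (h : hom C D) (g : hom B C) (f : hom A B),
      cell (comp1 h (comp1 g f)) (comp1 (comp1 h g) f);
  lunit : forall (A B : ob) (f : hom A B), cell (comp1 (id1 B) f) f;
  lunit_inv : forall (A B : ob) (f : hom A B), cell f (comp1 (id1 B) f);
  runit : forall (A B : ob) (f : hom A B), cell (comp1 f (id1 A)) f;
  runit_inv : forall (A B : ob) (f : hom A B), cell f (comp1 f (id1 A))
}.

Arguments hom {b} A B.
Arguments cell {b A B} f g.
Arguments id1 {b} A.
Arguments comp1 {b A B C} g f.
Arguments id2 {b A B} f.
Arguments vcomp {b A B f g h} _ _.
Arguments hcomp {b A B C g g' f f'} _ _.
Arguments assoc {b A B C D} h g f.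
Arguments assoc_inv {b A B C D} h g f.
Arguments lunit {b A B} f.
Arguments lunit_inv {b A B} f.
Arguments runit {b A B} f.
Arguments runit_inv {b A B} f.

Declare Scope bicat_scope.
Open Scope bicat_scope.
Notation "g ∘ f" := (comp1 g f) (at level 40, left associativity) : bicat_scope.
Notation "b ⋆ a" := (hcomp b a) (at level 40, left associativity) : bicat_scope.
Notation "b • a" := (vcomp b a) (at level 50, left associativity) : bicat_scope.

Record is_bicat (B : bicat_data) : Prop := {
  vcomp_assoc : forall (X Y : ob B) (f g h k : hom X Y)
      (c : cell h k) (b : cell g h) (a : cell f g), c • (b • a) = (c • b) • a;
  vcomp_id_l : forall (X Y : ob B) (f g : hom X Y) (a : cell f g), id2 g • a = a;
  vcomp_id_r : forall (X Y : ob B) (f g : hom X Y) (a : cell f g), a • id2 f = a;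
  hcomp_id : forall (X Y Z : ob B) (g : hom Y Z) (f : hom X Y),
      id2 g ⋆ id2 f = id2 (g ∘ f);
  interchange : forall (X Y Z : ob B) (g g' g'' : hom Y Z) (f f' f'' : hom X Y)
      (b : cell g g') (b' : cell g' g'') (a : cell f f') (a' : cell f' f''),
      (b' • b) ⋆ (a' • a) = (b' ⋆ a') • (b ⋆ a);
  assoc_nat : forall (W X Y Z : ob B) (h h' : hom Y Z) (g g' : hom X Y) (f f' : hom W X)
      (c : cell h h') (b : cell g g') (a : cell f f'),
      assoc h' g' f' • ((c ⋆ b) ⋆ a) = (c ⋆ (b ⋆ a)) • assoc h g f;
  lunit_nat : forall (X Y : ob B) (f f' : hom X Y) (a : cell f f'),
      lunit f' • (id2 (id1 Y) ⋆ a) = a • lunit f;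
  runit_nat : forall (X Y : ob B) (f f' : hom X Y) (a : cell f f'),
      runit f' • (a ⋆ id2 (id1 X)) = a • runit f;
  assoc_inv_l : forall (W X Y Z : ob B) (h : hom Y Z) (g : hom X Y) (f : hom W X),
      assoc_inv h g f • assoc h g f = id2 ((h ∘ g) ∘ f);
  assoc_inv_r : forall (W X Y Z : ob B) (h : hom Y Z) (g : hom X Y) (f : hom W X),
      assoc h g f • assoc_inv h g f = id2 (h ∘ (g ∘ f));
  lunit_inv_l : forall (X Y : ob B) (f : hom X Y), lunit_inv f • lunit f = id2 (id1 Y ∘ f);
  lunit_inv_r : forall (X Y : ob B) (f : hom X Y), lunit f • lunit_inv f = id2 f;
  runit_inv_l : forall (X Y : ob B) (f : hom X Y), runit_inv f • runit f = id2 (f ∘ id1 X);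
  runit_inv_r : forall (X Y : ob B) (f : hom X Y), runit f • runit_inv f = id2 f;
  pentagon : forall (V W X Y Z : ob B) (k : hom Y Z) (h : hom X Y) (g : hom W X) (f : hom V W),
      (id2 k ⋆ assoc h g f) • assoc k (h ∘ g) f • (assoc k h g ⋆ id2 f)
      = assoc k h (g ∘ f) • assoc (k ∘ h) g f;
  triangle : forall (X Y Z : ob B) (g : hom Y Z) (f : hom X Y),
      (id2 g ⋆ lunit f) • assoc g (id1 Y) f = runit g ⋆ id2 f
}.

Record lax_functor_data (B C : bicat_data) : Type := LaxFunctorData {
  fob : ob B -> ob C;
  fhom : forall A A' : ob B, hom A A' -> hom (fob A) (fob A');
  fcell : forall (A A' : ob B) (f g : hom A A'), cell f g -> cell (fhom f) (fhom g);
  fcomp : forall (A A' A'' : ob B) (g : hom A' A'') (f : hom A A'),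
      cell (fhom g ∘ fhom f) (fhom (g ∘ f));
  funit : forall A : ob B, cell (id1 (fob A)) (fhom (id1 A))
}.

Arguments fob {B C} _ _.
Arguments fhom {B C} _ {A A'} _.
Arguments fcell {B C} _ {A A' f g} _.
Arguments fcomp {B C} _ {A A' A''} _ _.
Arguments funit {B C} _ _.

Record is_lax_functor (B C : bicat_data) (F : lax_functor_data B C) : Prop := {
  fcell_id : forall (A A' : ob B) (f : hom A A'), fcell F (id2 f) = id2 (fhom F f);
  fcell_vcomp : forall (A A' : ob B) (f g h : hom A A') (b : cell g h) (a : cell f g),
      fcell F (b • a) = fcell F b • fcell F a;
  fcomp_nat : forall (X Y Z : ob B) (g g' : hom Y Z) (f f' : hom X Y)
      (b : cell g g') (a : cell f f'),
      fcomp F g' f' • (fcell F b ⋆ fcell F a) = fcell F (b ⋆ a) • fcomp F g f;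
  lax_assoc : forall (W X Y Z : ob B) (h : hom Y Z) (g : hom X Y) (f : hom W X),
      fcell F (assoc h g f) • fcomp F (h ∘ g) f • (fcomp F h g ⋆ id2 (fhom F f))
      = fcomp F h (g ∘ f) • (id2 (fhom F h) ⋆ fcomp F g f)
        • assoc (fhom F h) (fhom F g) (fhom F f);
  lax_lunit : forall (X Y : ob B) (f : hom X Y),
      lunit (fhom F f) = fcell F (lunit f) • fcomp F (id1 Y) f • (funit F Y ⋆ id2 (fhom F f));
  lax_runit : forall (X Y : ob B) (f : hom X Y),
      runit (fhom F f) = fcell F (runit f) • fcomp F f (id1 X) • (id2 (fhom F f) ⋆ funit F X)
}.

Definition invertible2 {B : bicat_data} {X Y : ob B} {f g : hom X Y} (a : cell f g) : Prop :=
  exists b : cell g f, b • a = id2 f /\ a • b = id2 g.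

Definition adjoint_equivalence {B : bicat_data} {X Y : ob B} (f : hom X Y) : Prop :=
  exists (g : hom Y X) (eta : cell (id1 X) (g ∘ f)) (eps : cell (f ∘ g) (id1 Y)),
    invertible2 eta /\ invertible2 eps /\
    lunit f • (eps ⋆ id2 f) • assoc_inv f g f • (id2 f ⋆ eta) • runit_inv f = id2 f /\
    runit g • (id2 g ⋆ eps) • assoc g f g • (eta ⋆ id2 g) • lunit_inv g = id2 g.

Definition adjoint_equivalent {B : bicat_data} (X Y : ob B) : Prop :=
  exists f : hom X Y, adjoint_equivalence f.

Definition essentially_surjective {B C : bicat_data} (F : lax_functor_data B C) : Prop :=
  forall X : ob C, exists A : ob B, adjoint_equivalent (fob F A) X.

Definition essentially_full {B C : bicat_data} (F : lax_functor_data B C) : Prop :=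
  forall (A A' : ob B) (f : hom (fob F A) (fob F A')),
    exists (p : hom A A') (a : cell (fhom F p) f), invertible2 a.

Definition fully_faithful {B C : bicat_data} (F : lax_functor_data B C) : Prop :=
  forall (A A' : ob B) (p q : hom A A'),
    (forall a b : cell p q, fcell F a = fcell F b -> a = b) /\
    (forall c : cell (fhom F p) (fhom F q), exists a : cell p q, fcell F a = c).

(* Lax transformations and inc-lax terminal objects, relative to a     *)
(* predicate singling out the 2-cells (used for the lax slice, whose   *)
(* 2-cells are the 2-cells of B satisfying a compatibility equation).  *)

Definition cellpred (D : bicat_data) : Type :=
  forall (X Y : ob D) (f g : hom X Y), cell f g -> Prop.

Definition all_cells (D : bicat_data) : cellpred D := fun _ _ _ _ _ => True.

Definition lax_transformation {D E : bicat_data} (PD : cellpred D) (PE : cellpred E)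
    (G H : lax_functor_data D E)
    (a1 : forall X : ob D, hom (fob G X) (fob H X))
    (a2 : forall (X Y : ob D) (f : hom X Y), cell (fhom H f ∘ a1 X) (a1 Y ∘ fhom G f))
    : Prop :=
  (forall (X Y : ob D) (f : hom X Y), PE _ _ _ _ (a2 X Y f)) /\
  (forall (X Y : ob D) (f g : hom X Y) (t : cell f g), PD _ _ _ _ t ->
      (id2 (a1 Y) ⋆ fcell G t) • a2 X Y f = a2 X Y g • (fcell H t ⋆ id2 (a1 X))) /\
  (forall X : ob D,
      (id2 (a1 X) ⋆ funit G X) • runit_inv (a1 X) • lunit (a1 X)
      = a2 X X (id1 X) • (funit H X ⋆ id2 (a1 X))) /\
  (forall (X Y Z : ob D) (f : hom X Y) (g : hom Y Z),
      (id2 (a1 Z) ⋆ fcomp G g f) • assoc (a1 Z) (fhom G g) (fhom G f)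
      • (a2 Y Z g ⋆ id2 (fhom G f)) • assoc_inv (fhom H g) (a1 Y) (fhom G f)
      • (id2 (fhom H g) ⋆ a2 X Y f) • assoc (fhom H g) (fhom H f) (a1 X)
      = a2 X Z (g ∘ f) • (fcomp H g f ⋆ id2 (a1 X))).

Definition id_lax (D : bicat_data) : lax_functor_data D D :=
  @LaxFunctorData D D (fun X => X) (fun _ _ f => f) (fun _ _ _ _ t => t)
    (fun _ _ _ g f => id2 (g ∘ f)) (fun X => id2 (id1 X)).

Definition const_lax (D : bicat_data) (T : ob D) : lax_functor_data D D :=
  @LaxFunctorData D D (fun _ => T) (fun _ _ _ => id1 T) (fun _ _ _ _ _ => id2 (id1 T))
    (fun _ _ _ _ _ => lunit (id1 T)) (fun _ => id2 (id1 T)).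

Definition initial_1cell {D : bicat_data} (P : cellpred D) {Z T : ob D} (f : hom Z T) : Prop :=
  forall g : hom Z T, exists a : cell f g, P _ _ _ _ a /\
    (forall b : cell f g, P _ _ _ _ b -> b = a).

Definition inc_lax_terminal {D : bicat_data} (P : cellpred D) (T : ob D) : Prop :=
  exists (k1 : forall Z : ob D, hom (fob (id_lax D) Z) (fob (const_lax T) Z))
         (k2 : forall (Z Z' : ob D) (u : hom Z Z'),
                 cell (fhom (const_lax T) u ∘ k1 Z) (k1 Z' ∘ fhom (id_lax D) u)),
    @lax_transformation D D P P (id_lax D) (const_lax T) k1 k2 /\
    (forall Z : ob D, initial_1cell P (k1 Z)) /\
    k1 T = id1 T.

Definition has_inc_lax_terminal {D : bicat_data} (P : cellpred D) : Prop :=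
  exists T : ob D, inc_lax_terminal P T.

Section LaxSlice.
Variables (B C : bicat_data) (F : lax_functor_data B C) (X : ob C).

Definition slice_ob : Type := { A : ob B & hom (fob F A) X }.

Definition slice_hom (Z0 Z1 : slice_ob) : Type :=
  { p : hom (projT1 Z0) (projT1 Z1) & cell (projT2 Z0) (projT2 Z1 ∘ fhom F p) }.

Definition slice_cell (Z0 Z1 : slice_ob) (u v : slice_hom Z0 Z1) : Type :=
  cell (projT1 u) (projT1 v).

Definition slice_id1 (Z : slice_ob) : slice_hom Z Z :=
  existT _ (id1 (projT1 Z)) ((id2 (projT2 Z) ⋆ funit F (projT1 Z)) • runit_inv (projT2 Z)).

Definition slice_comp1 (Z0 Z1 Z2 : slice_ob) (v : slice_hom Z1 Z2) (u : slice_hom Z0 Z1)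
    : slice_hom Z0 Z2 :=
  existT _ (projT1 v ∘ projT1 u)
    ((id2 (projT2 Z2) ⋆ fcomp F (projT1 v) (projT1 u))
     • assoc (projT2 Z2) (fhom F (projT1 v)) (fhom F (projT1 u))
     • (projT2 v ⋆ id2 (fhom F (projT1 u)))
     • projT2 u).

Definition lax_slice : bicat_data :=
  @BicatData slice_ob slice_hom slice_cell slice_id1 slice_comp1
    (fun _ _ u => id2 (projT1 u))
    (fun _ _ _ _ _ b a => b • a)
    (fun _ _ _ _ _ _ _ b a => b ⋆ a)
    (fun _ _ _ _ h g f => assoc (projT1 h) (projT1 g) (projT1 f))
    (fun _ _ _ _ h g f => assoc_inv (projT1 h) (projT1 g) (projT1 f))
    (fun _ _ f => lunit (projT1 f))
    (fun _ _ f => lunit_inv (projT1 f))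
    (fun _ _ f => runit (projT1 f))
    (fun _ _ f => runit_inv (projT1 f)).

Definition lax_slice_cells : cellpred lax_slice :=
  fun (Z0 Z1 : slice_ob) (u v : slice_hom Z0 Z1) (a : slice_cell u v) =>
    (id2 (projT2 Z1) ⋆ fcell F a) • projT2 u = projT2 v.

End LaxSlice.

Arguments lax_slice {B C} F X.
Arguments lax_slice_cells {B C} F X.

(* Main.v *)
Require Import Defs.
From Stdlib Require Import ClassicalEpsilon ProofIrrelevance.

Section Gen.
Context {D : bicat_data} (HD : is_bicat D).

Lemma vA {X Y : ob D} {f g h k : hom X Y} (c : cell h k) (b : cell g h) (a : cell f g) :
  c • (b • a) = c • b • a.
Proof. apply (vcomp_assoc HD). Qed.

Lemma vl2 {X Y : ob D} {f g h k : hom X Y} {x : cell h k} {b : cell g h} {a : cell f g} {c : cell f h} :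
  b • a = c -> x • b • a = x • c.
Proof. intros E; rewrite <- vA, E; reflexivity. Qed.

Lemma vl3 {X Y : ob D} {f g h k l : hom X Y} {x : cell k l} {c0 : cell h k} {b : cell g h} {a : cell f g} {d : cell f k} :
  c0 • b • a = d -> x • c0 • b • a = x • d.
Proof. intros E; rewrite <- !vA, <- E, !vA; reflexivity. Qed.

Lemma vl4 {X Y : ob D} {f g h k l m : hom X Y} {x : cell l m} {e : cell k l} {c0 : cell h k} {b : cell g h} {a : cell f g} {d : cell f l} :
  e • c0 • b • a = d -> x • e • c0 • b • a = x • d.
Proof. intros E; rewrite <- !vA, <- E, !vA; reflexivity. Qed.

Lemma idl {X Y : ob D} {f g : hom X Y} (a : cell f g) : id2 g • a = a.
Proof. apply (vcomp_id_l HD). Qed.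
Lemma idr {X Y : ob D} {f g : hom X Y} (a : cell f g) : a • id2 f = a.
Proof. apply (vcomp_id_r HD). Qed.
Lemma hid {X Y Z : ob D} (g : hom Y Z) (f : hom X Y) : id2 g ⋆ id2 f = id2 (g ∘ f).
Proof. apply (hcomp_id HD). Qed.
Lemma ich {X Y Z : ob D} {g g' g'' : hom Y Z} {f f' f'' : hom X Y}
      (b : cell g g') (b' : cell g' g'') (a : cell f f') (a' : cell f' f'') :
      (b' • b) ⋆ (a' • a) = (b' ⋆ a') • (b ⋆ a).
Proof. apply (interchange HD). Qed.

Lemma wr {X Y Z : ob D} {g g' g'' : hom Y Z} (f : hom X Y) (b : cell g g') (b' : cell g' g'') :
  (b' • b) ⋆ id2 f = (b' ⋆ id2 f) • (b ⋆ id2 f).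
Proof. rewrite <- ich, idl. reflexivity. Qed.
Lemma wl {X Y Z : ob D} (g : hom Y Z) {f f' f'' : hom X Y} (a : cell f f') (a' : cell f' f'') :
  id2 g ⋆ (a' • a) = (id2 g ⋆ a') • (id2 g ⋆ a).
Proof. rewrite <- ich, idl. reflexivity. Qed.
Lemma split1 {X Y Z : ob D} {g g' : hom Y Z} {f f' : hom X Y} (b : cell g g') (a : cell f f') :
  b ⋆ a = (b ⋆ id2 f') • (id2 g ⋆ a).
Proof. rewrite <- ich, idl, idr. reflexivity. Qed.
Lemma split2 {X Y Z : ob D} {g g' : hom Y Z} {f f' : hom X Y} (b : cell g g') (a : cell f f') :
  b ⋆ a = (id2 g' ⋆ a) • (b ⋆ id2 f).
Proof. rewrite <- ich, idl, idr. reflexivity. Qed.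

Definition inv2 {X Y : ob D} {f g : hom X Y} (a : cell f g) (b : cell g f) : Prop :=
  b • a = id2 f /\ a • b = id2 g.

Lemma inv_of {X Y : ob D} {f g : hom X Y} (a : cell f g) : invertible2 a -> exists b, inv2 a b.
Proof. intros [b H]; exists b; exact H. Qed.
Lemma inv_to {X Y : ob D} {f g : hom X Y} (a : cell f g) b : inv2 a b -> invertible2 a.
Proof. intros H; exists b; exact H. Qed.

Lemma inv2_sym {X Y : ob D} {f g : hom X Y} (a : cell f g) b : inv2 a b -> inv2 b a.
Proof. intros [H1 H2]; split; assumption. Qed.

Lemma inv_vcomp {X Y : ob D} {f g h : hom X Y} (b : cell g h) (a : cell f g) :
  invertible2 b -> invertible2 a -> invertible2 (b • a).
Proof.
  intros [b' [Hb1 Hb2]] [a' [Ha1 Ha2]]. exists (a' • b'). split.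
  - rewrite vA, <- (vA a' b' b), Hb1, idr. exact Ha1.
  - rewrite vA, <- (vA b a a'), Ha2, idr. exact Hb2.
Qed.

Lemma inv_hcomp {X Y Z : ob D} {g g' : hom Y Z} {f f' : hom X Y} (b : cell g g') (a : cell f f') :
  invertible2 b -> invertible2 a -> invertible2 (b ⋆ a).
Proof.
  intros [b' [Hb1 Hb2]] [a' [Ha1 Ha2]]. exists (b' ⋆ a'). split.
  - rewrite <- ich, Hb1, Ha1. apply hid.
  - rewrite <- ich, Hb2, Ha2. apply hid.
Qed.

Lemma inv_id {X Y : ob D} (f : hom X Y) : invertible2 (id2 f).
Proof. exists (id2 f). split; apply idl. Qed.

Lemma inv_assoc {W X Y Z : ob D} (h : hom Y Z) (g : hom X Y) (f : hom W X) : invertible2 (assoc h g f).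
Proof. exists (assoc_inv h g f). split; [apply (assoc_inv_l HD) | apply (assoc_inv_r HD)]. Qed.
Lemma inv_assoc_inv {W X Y Z : ob D} (h : hom Y Z) (g : hom X Y) (f : hom W X) : invertible2 (assoc_inv h g f).
Proof. exists (assoc h g f). split; [apply (assoc_inv_r HD) | apply (assoc_inv_l HD)]. Qed.
Lemma inv_lunit {X Y : ob D} (f : hom X Y) : invertible2 (lunit f).
Proof. exists (lunit_inv f). split; [apply (lunit_inv_l HD) | apply (lunit_inv_r HD)]. Qed.
Lemma inv_lunit_inv {X Y : ob D} (f : hom X Y) : invertible2 (lunit_inv f).
Proof. exists (lunit f). split; [apply (lunit_inv_r HD) | apply (lunit_inv_l HD)]. Qed.
Lemma inv_runit {X Y : ob D} (f : hom X Y) : invertible2 (runit f).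
Proof. exists (runit_inv f). split; [apply (runit_inv_l HD) | apply (runit_inv_r HD)]. Qed.
Lemma inv_runit_inv {X Y : ob D} (f : hom X Y) : invertible2 (runit_inv f).
Proof. exists (runit f). split; [apply (runit_inv_r HD) | apply (runit_inv_l HD)]. Qed.

Lemma cancel_r {X Y : ob D} {f g h : hom X Y} (a : cell f g) (b c : cell g h) :
  invertible2 a -> b • a = c • a -> b = c.
Proof.
  intros [a' [H1 H2]] E.
  rewrite <- (idr b), <- (idr c), <- H2, !vA, E. reflexivity.
Qed.
Lemma cancel_l {X Y : ob D} {f g h : hom X Y} (a : cell g h) (b c : cell f g) :
  invertible2 a -> a • b = a • c -> b = c.
Proof.
  intros [a' [H1 H2]] E.
  rewrite <- (idl b), <- (idl c), <- H1, <- !vA, E. reflexivity.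
Qed.

Lemma inv_from_sides {X Y : ob D} {f g : hom X Y} (a : cell f g) (t : cell g f) :
  invertible2 (t • a) -> invertible2 (a • t) -> invertible2 a.
Proof.
  intros [l [Hl1 Hl2]] [r [Hr1 Hr2]].
  (* left inverse L = l • t, right inverse R = t • r *)
  assert (EL : (l • t) • a = id2 f) by (rewrite <- vA; exact Hl1).
  assert (ER : a • (t • r) = id2 g) by (rewrite vA; exact Hr2).
  exists (t • r). split; [|exact ER].
  assert (E : l • t = t • r).
  { rewrite <- (idr (l • t)), <- ER, vA, EL, idl. reflexivity. }
  rewrite <- E. exact EL.
Qed.

Lemma inv_rw {X Y : ob D} {f g : hom X Y} (a b : cell f g) : a = b -> invertible2 a -> invertible2 b.
Proof. intros ->; auto. Qed.

Lemma runit_inv_nat {X Y : ob D} {f f' : hom X Y} (a : cell f f') :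
  runit_inv f' • a = (a ⋆ id2 (id1 X)) • runit_inv f.
Proof.
  apply (cancel_r (runit f)); [apply inv_runit|].
  rewrite <- (vA _ (runit_inv f)), (runit_inv_l HD), idr.
  apply (cancel_l (runit f')); [apply inv_runit|].
  rewrite !vA, (runit_inv_r HD), idl, (runit_nat HD). reflexivity.
Qed.
Lemma lunit_inv_nat {X Y : ob D} {f f' : hom X Y} (a : cell f f') :
  lunit_inv f' • a = (id2 (id1 Y) ⋆ a) • lunit_inv f.
Proof.
  apply (cancel_r (lunit f)); [apply inv_lunit|].
  rewrite <- (vA _ (lunit_inv f)), (lunit_inv_l HD), idr.
  apply (cancel_l (lunit f')); [apply inv_lunit|].
  rewrite !vA, (lunit_inv_r HD), idl, (lunit_nat HD). reflexivity.
Qed.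
Lemma assoc_inv_nat {W X Y Z : ob D} {h h' : hom Y Z} {g g' : hom X Y} {f f' : hom W X}
      (c : cell h h') (b : cell g g') (a : cell f f') :
      assoc_inv h' g' f' • (c ⋆ (b ⋆ a)) = ((c ⋆ b) ⋆ a) • assoc_inv h g f.
Proof.
  apply (cancel_l (assoc h' g' f')); [apply inv_assoc|].
  rewrite !vA, (assoc_inv_r HD), idl, (assoc_nat HD), <- vA, (assoc_inv_r HD), idr.
  reflexivity.
Qed.

End Gen.

Tactic Notation "rw" constr(H) open_constr(E) := first [rewrite E | rewrite (vl2 H E) | rewrite (vl3 H E) | rewrite (vl4 H E)]; rewrite ?(vA H).

Section Gen2.
Context {D : bicat_data} (HD : is_bicat D).

Lemma rwhisk_inj {X Y : ob D} {f f' : hom X Y} (a b : cell f f') :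
  a ⋆ id2 (id1 X) = b ⋆ id2 (id1 X) -> a = b.
Proof.
  intros E. apply (cancel_r HD (runit f)); [apply (inv_runit HD)|].
  rewrite <- !(runit_nat HD), E. reflexivity.
Qed.

Lemma runit_comp {X Y Z : ob D} (g : hom Y Z) (f : hom X Y) :
  runit (g ∘ f) = (id2 g ⋆ runit f) • assoc g f (id1 X).
Proof.
  symmetry. apply rwhisk_inj.
  apply (cancel_l HD (assoc g f (id1 X))); [apply (inv_assoc HD)|].
  rewrite (wr HD).
  rewrite (vA HD), (assoc_nat HD).
  rewrite <- (triangle HD f (id1 X)).
  rewrite (wl HD).
  rw HD (pentagon HD _ _ _ _).
  rewrite <- (assoc_nat HD (id2 g) (id2 f) (lunit (id1 X))).
  rewrite (hid HD), <- (vA HD), (triangle HD). reflexivity.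
Qed.

Definition Winj {Y Z : ob D} (x : hom Y Z) : Prop :=
  forall W (h h' : hom W Y) (c1 c2 : cell h h'), id2 x ⋆ c1 = id2 x ⋆ c2 -> c1 = c2.
Definition Wsurj {Y Z : ob D} (x : hom Y Z) : Prop :=
  forall W (h h' : hom W Y) (d : cell (x ∘ h) (x ∘ h')), exists c, id2 x ⋆ c = d.

Lemma W_id {W Y : ob D} {h h' : hom W Y} (c : cell h h') :
  id2 (id1 Y) ⋆ c = lunit_inv h' • c • lunit h.
Proof.
  rewrite <- (vA HD), <- (lunit_nat HD), (vA HD), (lunit_inv_l HD), (idl HD). reflexivity.
Qed.

Lemma W_comp {W X Y Z : ob D} (x : hom Y Z) (y : hom X Y) {h h' : hom W X} (c : cell h h') :
  id2 (x ∘ y) ⋆ c = assoc_inv x y h' • (id2 x ⋆ (id2 y ⋆ c)) • assoc x y h.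
Proof.
  rewrite <- (vA HD), <- (assoc_nat HD), (vA HD), (assoc_inv_l HD), (idl HD), (hid HD). reflexivity.
Qed.

Lemma Winj_id (Y : ob D) : Winj (id1 Y).
Proof.
  intros W h h' c1 c2 E. rewrite !W_id in E.
  apply (cancel_r HD _ _ _ (inv_lunit HD h)) in E.
  apply (cancel_l HD _ _ _ (inv_lunit_inv HD h')) in E. exact E.
Qed.

Lemma Wsurj_id (Y : ob D) : Wsurj (id1 Y).
Proof.
  intros W h h' d. exists (lunit h' • d • lunit_inv h).
  rewrite W_id, !(vA HD), (lunit_inv_l HD), (idl HD), <- (vA HD), (lunit_inv_l HD), (idr HD).
  reflexivity.
Qed.

Lemma W_iso {W Y Z : ob D} {x x' : hom Y Z} (r : cell x x') (r' : cell x' x)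
  (Hr : r' • r = id2 x) (Hr' : r • r' = id2 x') {h h' : hom W Y} (c : cell h h') :
  id2 x' ⋆ c = (r ⋆ id2 h') • (id2 x ⋆ c) • (r' ⋆ id2 h).
Proof.
  rewrite <- !(ich HD), !(idl HD), !(idr HD), Hr'. reflexivity.
Qed.

Lemma Winj_iso {Y Z : ob D} {x x' : hom Y Z} (r : cell x x') :
  invertible2 r -> Winj x -> Winj x'.
Proof.
  intros [r' [H1 H2]] Hx W h h' c1 c2 E.
  apply Hx. rewrite !(W_iso r r' H1 H2) in E.
  apply (cancel_r HD) in E; [| apply (inv_hcomp HD); [exists r; split; assumption | apply (inv_id HD)]].
  apply (cancel_l HD) in E; [exact E | apply (inv_hcomp HD); [exists r'; split; assumption | apply (inv_id HD)]].
Qed.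

Lemma Wsurj_iso {Y Z : ob D} {x x' : hom Y Z} (r : cell x x') :
  invertible2 r -> Wsurj x -> Wsurj x'.
Proof.
  intros [r' [H1 H2]] Hx W h h' d.
  destruct (Hx W h h' ((r' ⋆ id2 h') • d • (r ⋆ id2 h))) as [c Hc].
  exists c. rewrite (W_iso r r' H1 H2), Hc.
  rewrite !(vA HD), <- (wr HD), H2, (hid HD), (idl HD), <- (vA HD), <- (wr HD), H2, (hid HD), (idr HD).
  reflexivity.
Qed.

Lemma Winj_comp {X Y Z : ob D} (x : hom Y Z) (y : hom X Y) : Winj (x ∘ y) -> Winj y.
Proof.
  intros Hxy W h h' c1 c2 E. apply Hxy. rewrite !W_comp, E. reflexivity.
Qed.

Lemma Wsurj_comp {X Y Z : ob D} (x : hom Y Z) (y : hom X Y) : Wsurj (x ∘ y) -> Winj x -> Wsurj y.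
Proof.
  intros Hxy Hx W h h' d.
  destruct (Hxy W h h' (assoc_inv x y h' • (id2 x ⋆ d) • assoc x y h)) as [c Hc].
  exists c. apply Hx. rewrite W_comp in Hc.
  apply (cancel_r HD _ _ _ (inv_assoc HD _ _ _)) in Hc.
  apply (cancel_l HD _ _ _ (inv_assoc_inv HD _ _ _)) in Hc. exact Hc.
Qed.

Lemma equiv_W {X Y : ob D} (e : hom X Y) (g : hom Y X) (eta : cell (id1 X) (g ∘ e))
  (eps : cell (e ∘ g) (id1 Y)) : invertible2 eta -> invertible2 eps -> Winj e /\ Wsurj e.
Proof.
  intros Heta Heps.
  assert (Hge : Winj (g ∘ e) /\ Wsurj (g ∘ e)).
  { split; [eapply Winj_iso | eapply Wsurj_iso]; eauto using Winj_id, Wsurj_id. }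
  assert (Heg : Winj (e ∘ g)).
  { destruct Heps as [eps' [H1 H2]].
    eapply Winj_iso; [|apply Winj_id]. exists eps; split; eassumption. }
  split.
  - eapply Winj_comp; apply Hge.
  - eapply Wsurj_comp; [apply Hge|]. eapply Winj_comp; exact Heg.
Qed.

End Gen2.

Section Lax.
Context {B C : bicat_data} (HB : is_bicat B) (HC : is_bicat C)
  (F : lax_functor_data B C) (HF : is_lax_functor F).

Lemma inv_fcell {A A' : ob B} {f g : hom A A'} (a : cell f g) :
  invertible2 a -> invertible2 (fcell F a).
Proof.
  intros [b [H1 H2]]. exists (fcell F b). split.
  - rewrite <- (fcell_vcomp HF), H1, (fcell_id HF). reflexivity.
  - rewrite <- (fcell_vcomp HF), H2, (fcell_id HF). reflexivity.
Qed.

Lemma funit_invertible (Hfull : essentially_full F) (Hff : fully_faithful F) (A : ob B) :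
  invertible2 (funit F A).
Proof.
  destruct (Hfull A A (id1 (fob F A))) as [p [i [i' [Hi1 Hi2]]]].
  set (t := i • fcell F (lunit p) • fcomp F (id1 A) p • (id2 (fhom F (id1 A)) ⋆ i')
            • runit_inv (fhom F (id1 A))).
  apply (inv_from_sides HC _ t).
  - apply (inv_rw (lunit (id1 (fob F A)) • runit_inv (id1 (fob F A)))).
    2:{ apply (inv_vcomp HC); [apply (inv_lunit HC) | apply (inv_runit_inv HC)]. }
    symmetry. unfold t.
    rw HC (runit_inv_nat HC _).
    rw HC (eq_sym (ich HC _ _ _ _)).
    rewrite (idl HC), (idr HC), (split1 HC), !(vA HC).
    rw HC (eq_sym (lax_lunit HF _)).
    rw HC (lunit_nat HC _).
    rw HC Hi2. rewrite (idl HC). reflexivity.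
  - destruct (proj2 (Hff A A p (id1 A)) (funit F A • i)) as [gm Hgm].
    apply (inv_rw (fcell F (lunit (id1 A)) • fcell F (runit_inv (id1 A)))).
    2:{ apply (inv_vcomp HC); apply inv_fcell; [apply (inv_lunit HB) | apply (inv_runit_inv HB)]. }
    symmetry. unfold t.
    rewrite !(vA HC).
    rewrite <- Hgm.
    rewrite <- (fcell_vcomp HF), <- (lunit_nat HB), (fcell_vcomp HF).
    rw HC (eq_sym (fcomp_nat HF _ _)).
    rewrite (fcell_id HF).
    rw HC (eq_sym (wl HC _ _ _)).
    rewrite Hgm, <- (vA HC (funit F A) i i'), Hi2, (idr HC).
    symmetry.
    transitivity (fcell F (lunit (id1 A)) • fcell F (runit_inv (id1 A))
                  • (runit (fhom F (id1 A)) • runit_inv (fhom F (id1 A)))).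
    { rewrite (runit_inv_r HC), (idr HC). reflexivity. }
    rewrite (lax_runit HF (id1 A)).
    rewrite !(vA HC).
    rw HC (eq_sym (fcell_vcomp HF (runit_inv (id1 A)) (runit (id1 A)))).
    rewrite (runit_inv_l HB), (fcell_id HF), (idr HC). reflexivity.
Qed.

End Lax.

Section Sl.
Context {B C : bicat_data} (HB : is_bicat B) (HC : is_bicat C)
  (F : lax_functor_data B C) (HF : is_lax_functor F) (X : ob C).

Notation P := (lax_slice_cells F X).
Notation SO := (slice_ob F X).
Notation SH := (@slice_hom B C F X).

Lemma P_id (Z0 Z1 : SO) (u : SH Z0 Z1) : P Z0 Z1 u u (id2 (projT1 u)).
Proof.
  destruct Z0 as [A0 f0], Z1 as [A1 f1], u as [p th].
  unfold lax_slice_cells; simpl.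
  rewrite (fcell_id HF), (hid HC), (idl HC). reflexivity.
Qed.

Lemma P_vcomp (Z0 Z1 : SO) (u v w : SH Z0 Z1) (a : cell (projT1 u) (projT1 v))
  (b : cell (projT1 v) (projT1 w)) : P Z0 Z1 u v a -> P Z0 Z1 v w b -> P Z0 Z1 u w (b • a).
Proof.
  destruct Z0 as [A0 f0], Z1 as [A1 f1], u as [p th], v as [q si], w as [r ta].
  unfold lax_slice_cells; simpl. intros Ha Hb.
  rewrite (fcell_vcomp HF), (wl HC), <- (vA HC), Ha, Hb. reflexivity.
Qed.

Lemma P_inv (Z0 Z1 : SO) (u v : SH Z0 Z1) (a : cell (projT1 u) (projT1 v))
  (a' : cell (projT1 v) (projT1 u)) : a' • a = id2 _ -> P Z0 Z1 u v a -> P Z0 Z1 v u a'.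
Proof.
  destruct Z0 as [A0 f0], Z1 as [A1 f1], u as [p th], v as [q si].
  unfold lax_slice_cells; simpl. intros H Ha.
  rewrite <- Ha, (vA HC), <- (wl HC), <- (fcell_vcomp HF), H, (fcell_id HF), (hid HC), (idl HC).
  reflexivity.
Qed.

Lemma P_hcomp (Z0 Z1 Z2 : SO) (u u' : SH Z0 Z1) (v v' : SH Z1 Z2)
  (a : cell (projT1 u) (projT1 u')) (b : cell (projT1 v) (projT1 v')) :
  P Z0 Z1 u u' a -> P Z1 Z2 v v' b ->
  P Z0 Z2 (slice_comp1 v u) (slice_comp1 v' u') (b ⋆ a).
Proof.
  destruct Z0 as [A0 f0], Z1 as [A1 f1], Z2 as [A2 f2], u as [p th], u' as [p' th'],
    v as [q si], v' as [q' si'].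
  unfold lax_slice_cells, slice_comp1; simpl. intros Ha Hb.
  rewrite <- Ha, <- Hb.
  rewrite !(vA HC).
  rewrite <- (wl HC), <- (fcomp_nat HF), (wl HC).
  rw HC (eq_sym (assoc_nat HC _ _ _)).
  rw HC (eq_sym (ich HC _ _ _ _)).
  rewrite (idr HC), (split1 HC (_ • si)), !(vA HC).
  reflexivity.
Qed.

End Sl.

Section Sl2.
Context {B C : bicat_data} (HB : is_bicat B) (HC : is_bicat C)
  (F : lax_functor_data B C) (HF : is_lax_functor F) (X : ob C).

Notation P := (lax_slice_cells F X).
Notation SO := (slice_ob F X).
Notation SH := (@slice_hom B C F X).

Lemma P_lunit (Z0 Z1 : SO) (u : SH Z0 Z1) :
  P Z0 Z1 (slice_comp1 (slice_id1 Z1) u) u (lunit (projT1 u)).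
Proof.
  destruct Z0 as [A0 f0], Z1 as [A1 f1], u as [p th].
  unfold lax_slice_cells, slice_comp1, slice_id1; simpl.
  rewrite !(vA HC), <- (wl HC), (wr HC), !(vA HC).
  rw HC (assoc_nat HC _ _ _).
  rw HC (eq_sym (wl HC _ _ _)).
  rewrite <- (lax_lunit HF).
  rw HC (triangle HC _ _).
  rw HC (eq_sym (wr HC _ _ _)).
  rewrite (runit_inv_r HC), (hid HC), (idl HC). reflexivity.
Qed.

Lemma P_runit (Z0 Z1 : SO) (u : SH Z0 Z1) :
  P Z0 Z1 (slice_comp1 u (slice_id1 Z0)) u (runit (projT1 u)).
Proof.
  destruct Z0 as [A0 f0], Z1 as [A1 f1], u as [p th].
  unfold lax_slice_cells, slice_comp1, slice_id1; simpl.
  rewrite !(vA HC), <- (wl HC).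
  rw HC (eq_sym (ich HC _ _ _ _)).
  rewrite (idr HC), (idl HC), (split2 HC th), !(vA HC).
  cbn. rewrite <- (hid HC f1 (@fhom B C F A0 A1 p)).
  rw HC (assoc_nat HC _ _ _).
  rw HC (eq_sym (wl HC _ _ _)).
  rewrite <- (lax_runit HF).
  rw HC (eq_sym (runit_comp HC _ _)).
  rw HC (runit_nat HC _).
  rewrite <- (vA HC), (runit_inv_r HC), (idr HC). reflexivity.
Qed.

End Sl2.

Section Sl3.
Context {B C : bicat_data} (HB : is_bicat B) (HC : is_bicat C)
  (F : lax_functor_data B C) (HF : is_lax_functor F) (X : ob C).

Notation P := (lax_slice_cells F X).
Notation SO := (slice_ob F X).
Notation SH := (@slice_hom B C F X).

Lemma P_assoc (Z0 Z1 Z2 Z3 : SO) (u : SH Z0 Z1) (v : SH Z1 Z2) (w : SH Z2 Z3) :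
  P Z0 Z3 (slice_comp1 (slice_comp1 w v) u) (slice_comp1 w (slice_comp1 v u))
    (assoc (projT1 w) (projT1 v) (projT1 u)).
Proof.
  destruct Z0 as [A0 f0], Z1 as [A1 f1], Z2 as [A2 f2], Z3 as [A3 f3],
    u as [p th], v as [q si], w as [r ta].
  unfold lax_slice_cells, slice_comp1; simpl.
  rewrite !(vA HC), <- (wl HC).
  rewrite !(wr HC), !(vA HC).
  rw HC (assoc_nat HC _ _ _).
  rw HC (eq_sym (wl HC _ _ _)).
  rewrite (lax_assoc HF), !(wl HC), ?(vA HC).
  rw HC (pentagon HC _ _ _ _).
  rw HC (assoc_nat HC _ _ _).
  rewrite (hid HC).
  rw HC (eq_sym (assoc_nat HC _ _ _)).
  rewrite (hid HC).
  rw HC (eq_sym (ich HC _ _ _ _)).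
  rewrite (idl HC), (idr HC), (split1 HC ta), !(vA HC).
  reflexivity.
Qed.

End Sl3.

Section Mn.
Context {B C : bicat_data} (HB : is_bicat B) (HC : is_bicat C)
  (F : lax_functor_data B C) (HF : is_lax_functor F) (X : ob C)
  (Hff : fully_faithful F).

Notation P := (lax_slice_cells F X).
Notation SO := (slice_ob F X).
Notation SH := (@slice_hom B C F X).
Notation D := (lax_slice F X).

Definition good {Z0 Z1 : SO} (u : SH Z0 Z1) : Prop := invertible2 (projT2 u).

Lemma good_tr (Z0 Z1 : SO) (u w : SH Z0 Z1) (a : cell (projT1 u) (projT1 w)) :
  P Z0 Z1 u w a -> invertible2 a -> good u -> good w.
Proof.
  destruct Z0 as [A0 f0], Z1 as [A1 f1], u as [p th], w as [q si].
  unfold good, lax_slice_cells; simpl. intros Ha Hi Hu.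
  rewrite <- Ha. apply (inv_vcomp HC); [|exact Hu].
  apply (inv_hcomp HC); [apply (inv_id HC)|]. apply (inv_fcell F HF). exact Hi.
Qed.

Variable T : SO.
Hypothesis HWi : Winj (projT2 T).
Hypothesis HWs : Wsurj (projT2 T).

Lemma cell_exists (Z : SO) (u w : SH Z T) : good u ->
  exists a : cell (projT1 u) (projT1 w), P Z T u w a /\
    (forall b : cell (projT1 u) (projT1 w), P Z T u w b -> b = a).
Proof.
  destruct T as [A e]. destruct Z as [A0 f0], u as [p th], w as [q si].
  unfold good, lax_slice_cells; simpl in *. intros [th' [H1 H2]].
  destruct (HWs _ _ _ (si • th')) as [gm Hgm].
  destruct (proj2 (Hff _ _ p q) gm) as [a Ha].
  exists a. split.
  - rewrite Ha, Hgm, <- (vA HC), H1, (idr HC). reflexivity.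
  - intros b Hb. apply (proj1 (Hff _ _ p q)). apply HWi. rewrite Ha, Hgm.
    rewrite <- Hb, <- (vA HC), H2, (idr HC). reflexivity.
Qed.

Lemma cell_unique (Z : SO) (u w : SH Z T) (a b : cell (projT1 u) (projT1 w)) :
  good u -> P Z T u w a -> P Z T u w b -> a = b.
Proof.
  intros Hu Ha Hb. destruct (cell_exists Z u w Hu) as [c [Hc Hc']].
  rewrite (Hc' a Ha), (Hc' b Hb). reflexivity.
Qed.


Hypothesis Hid : good (slice_id1 T).
Hypothesis Hk : forall Z : SO, exists u : SH Z T, good u.

Definition k1 (Z : SO) : SH Z T :=
  match excluded_middle_informative (Z = T) with
  | left H => eq_rect_r (fun Z => SH Z T) (slice_id1 T) H
  | right _ => proj1_sig (constructive_indefinite_description _ (Hk Z))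
  end.

Lemma k1_good (Z : SO) : good (k1 Z).
Proof.
  unfold k1. destruct (excluded_middle_informative (Z = T)) as [H|H].
  - subst Z. exact Hid.
  - exact (proj2_sig (constructive_indefinite_description _ (Hk Z))).
Qed.

Lemma k1_T : k1 T = slice_id1 T.
Proof.
  unfold k1. destruct (excluded_middle_informative (T = T)) as [H|H].
  - rewrite (proof_irrelevance _ H eq_refl). reflexivity.
  - exfalso; apply H; reflexivity.
Qed.

Lemma P_lunit_inv (Z0 Z1 : SO) (u : SH Z0 Z1) :
  P Z0 Z1 u (slice_comp1 (slice_id1 Z1) u) (lunit_inv (projT1 u)).
Proof.
  eapply (P_inv HC F HF X); [apply (lunit_inv_l HB) | apply (P_lunit HC F HF X)].
Qed.
Lemma P_runit_inv (Z0 Z1 : SO) (u : SH Z0 Z1) :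
  P Z0 Z1 u (slice_comp1 u (slice_id1 Z0)) (runit_inv (projT1 u)).
Proof.
  eapply (P_inv HC F HF X); [apply (runit_inv_l HB) | apply (P_runit HC F HF X)].
Qed.
Lemma P_assoc_inv (Z0 Z1 Z2 Z3 : SO) (u : SH Z0 Z1) (v : SH Z1 Z2) (w : SH Z2 Z3) :
  P Z0 Z3 (slice_comp1 w (slice_comp1 v u)) (slice_comp1 (slice_comp1 w v) u)
    (assoc_inv (projT1 w) (projT1 v) (projT1 u)).
Proof.
  eapply (P_inv HC F HF X); [apply (assoc_inv_l HB) | apply (P_assoc HC F HF X)].
Qed.

Lemma src_good (Z : SO) : good (slice_comp1 (slice_id1 T) (k1 Z)).
Proof.
  eapply good_tr; [apply P_lunit_inv | apply (inv_lunit_inv HB) | apply k1_good].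
Qed.

Lemma src2_good (Z : SO) : good (slice_comp1 (slice_comp1 (slice_id1 T) (slice_id1 T)) (k1 Z)).
Proof.
  eapply good_tr; [| | apply src_good].
  - apply (P_hcomp HC F HF X). apply (P_id HC F HF X). apply P_lunit_inv.
  - apply (inv_hcomp HB); [apply (inv_lunit_inv HB) | apply (inv_id HB)].
Qed.

Definition k2 (Z Z' : SO) (u : SH Z Z') :
  cell (projT1 (slice_comp1 (slice_id1 T) (k1 Z))) (projT1 (slice_comp1 (k1 Z') u)) :=
  proj1_sig (constructive_indefinite_description _
    (cell_exists Z (slice_comp1 (slice_id1 T) (k1 Z)) (slice_comp1 (k1 Z') u) (src_good Z))).

Lemma k2_P (Z Z' : SO) (u : SH Z Z') :
  P Z T (slice_comp1 (slice_id1 T) (k1 Z)) (slice_comp1 (k1 Z') u) (k2 Z Z' u).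
Proof.
  unfold k2. exact (proj1 (proj2_sig (constructive_indefinite_description _ (cell_exists Z (slice_comp1 (slice_id1 T) (k1 Z)) (slice_comp1 (k1 Z') u) (src_good Z))))).
Qed.

Theorem T_terminal : inc_lax_terminal P T.
Proof.
  exists k1, k2. split; [|split].
  - unfold lax_transformation. split; [|split; [|split]].
    + intros. apply k2_P.
    + intros Z Z' f g t Ht. simpl.
      apply (cell_unique Z (slice_comp1 (slice_id1 T) (k1 Z)) (slice_comp1 (k1 Z') g)).
      * apply src_good.
      * refine (P_vcomp HC F HF X Z T (slice_comp1 (slice_id1 T) (k1 Z)) (slice_comp1 (k1 Z') f) (slice_comp1 (k1 Z') g) (k2 Z Z' f) (id2 (projT1 (k1 Z')) ⋆ t) (k2_P _ _ _) _).
        apply (P_hcomp HC F HF X); [exact Ht | apply (P_id HC F HF X)].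
      * refine (P_vcomp HC F HF X Z T (slice_comp1 (slice_id1 T) (k1 Z)) (slice_comp1 (slice_id1 T) (k1 Z)) (slice_comp1 (k1 Z') g) _ (k2 Z Z' g) _ (k2_P _ _ _)).
        apply (P_hcomp HC F HF X); apply (P_id HC F HF X).
    + intros Z. simpl.
      apply (cell_unique Z (slice_comp1 (slice_id1 T) (k1 Z)) (slice_comp1 (k1 Z) (slice_id1 Z))).
      * apply src_good.
      * refine (P_vcomp HC F HF X Z T (slice_comp1 (slice_id1 T) (k1 Z)) (k1 Z)
                  (slice_comp1 (k1 Z) (slice_id1 Z)) _ _ (P_lunit HC F HF X _ _ _) _).
        refine (P_vcomp HC F HF X Z T (k1 Z) (slice_comp1 (k1 Z) (slice_id1 Z))
                  (slice_comp1 (k1 Z) (slice_id1 Z)) _ _ (P_runit_inv _ _ _) _).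
        apply (P_hcomp HC F HF X); apply (P_id HC F HF X).
      * refine (P_vcomp HC F HF X Z T (slice_comp1 (slice_id1 T) (k1 Z)) (slice_comp1 (slice_id1 T) (k1 Z)) (slice_comp1 (k1 Z) (slice_id1 Z)) _ (k2 Z Z (slice_id1 Z)) _ (k2_P _ _ _)).
        apply (P_hcomp HC F HF X); apply (P_id HC F HF X).
    + intros Z1 Z2 Z3 f g. simpl.
      set (I := slice_id1 T).
      apply (cell_unique Z1 (slice_comp1 (slice_comp1 I I) (k1 Z1))
               (slice_comp1 (k1 Z3) (slice_comp1 g f))).
      * apply src2_good.
      * refine (P_vcomp HC F HF X Z1 T (slice_comp1 (slice_comp1 I I) (k1 Z1))
                  (slice_comp1 I (slice_comp1 I (k1 Z1)))
                  (slice_comp1 (k1 Z3) (slice_comp1 g f)) _ _ (P_assoc HC F HF X _ _ _ _ _ _ _) _).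
        refine (P_vcomp HC F HF X Z1 T (slice_comp1 I (slice_comp1 I (k1 Z1)))
                  (slice_comp1 I (slice_comp1 (k1 Z2) f))
                  (slice_comp1 (k1 Z3) (slice_comp1 g f)) _ _
                  (P_hcomp HC F HF X _ _ _ _ _ _ _ _ _ (k2_P _ _ _) (P_id HC F HF X _ _ _)) _).
        refine (P_vcomp HC F HF X Z1 T (slice_comp1 I (slice_comp1 (k1 Z2) f))
                  (slice_comp1 (slice_comp1 I (k1 Z2)) f)
                  (slice_comp1 (k1 Z3) (slice_comp1 g f)) _ _ (P_assoc_inv _ _ _ _ _ _ _) _).
        refine (P_vcomp HC F HF X Z1 T (slice_comp1 (slice_comp1 I (k1 Z2)) f)
                  (slice_comp1 (slice_comp1 (k1 Z3) g) f)
                  (slice_comp1 (k1 Z3) (slice_comp1 g f)) _ _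
                  (P_hcomp HC F HF X _ _ _ _ _ _ _ _ _ (P_id HC F HF X _ _ _) (k2_P _ _ _)) _).
        refine (P_vcomp HC F HF X Z1 T (slice_comp1 (slice_comp1 (k1 Z3) g) f)
                  (slice_comp1 (k1 Z3) (slice_comp1 g f))
                  (slice_comp1 (k1 Z3) (slice_comp1 g f)) _ _ (P_assoc HC F HF X _ _ _ _ _ _ _) _).
        apply (P_hcomp HC F HF X); apply (P_id HC F HF X).
      * refine (P_vcomp HC F HF X Z1 T (slice_comp1 (slice_comp1 I I) (k1 Z1))
                  (slice_comp1 I (k1 Z1))
                  (slice_comp1 (k1 Z3) (slice_comp1 g f)) _ _ _ (k2_P _ _ _)).
        apply (P_hcomp HC F HF X); [apply (P_id HC F HF X) | apply (P_lunit HC F HF X)].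
  - intros Z g. apply (cell_exists Z (k1 Z) g (k1_good Z)).
  - exact k1_T.
Qed.

End Mn.

Theorem proposition4p7 (B C : bicat_data) (HB : is_bicat B) (HC : is_bicat C)
    (F : lax_functor_data B C) (HF : is_lax_functor F) :
  essentially_surjective F -> essentially_full F -> fully_faithful F ->
  forall X : ob C, has_inc_lax_terminal (lax_slice_cells F X).
Proof.
  intros Hes Hfull Hff X.
  destruct (Hes X) as [A [e [g [eta [eps [Heta [Heps _]]]]]]].
  destruct (equiv_W HC e g eta eps Heta Heps) as [HWi HWs].
  exists (existT (fun A => hom (fob F A) X) A e).
  apply (T_terminal HB HC F HF X Hff); [exact HWi | exact HWs | |].
  - unfold good; simpl.
    apply (inv_vcomp HC); [| apply (inv_runit_inv HC)].
    apply (inv_hcomp HC); [apply (inv_id HC) | apply (funit_invertible HB HC F HF Hfull Hff)].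
  - intros [A0 f0].
    destruct (Hfull A0 A (g ∘ f0)) as [p [i [i' [Hi1 Hi2]]]].
    destruct Heps as [eps' [He1 He2]].
    exists (existT (fun p => cell f0 (e ∘ fhom F p)) p
              ((id2 e ⋆ i') • assoc e g f0 • (eps' ⋆ id2 f0) • lunit_inv f0)).
    unfold good; simpl.
    repeat apply (inv_vcomp HC).
    + apply (inv_hcomp HC); [apply (inv_id HC) | exists i; split; assumption].
    + apply (inv_assoc HC).
    + apply (inv_hcomp HC); [exists eps; split; assumption | apply (inv_id HC)].
    + apply (inv_lunit_inv HC).
Qed.
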